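(* Let $D$ be a sqrt-bounded degree function and consider a GSAT maintained under get, insert and delete operations with counter-based rebuilding. Not counting the time of searching inside a node, the amortized cost of an insert, delete or get operation is $O(\log m)$; that is, the total cost of the first $m$ operations is $O(m\log m)$.
   Context: A function $f$ is sqrt-bounded if $f(m)\ge 1$ for all $m$ and there is a constant $M^*$ with $f(m)\le\max(\sqrt m,M^* )$ for all $m$. A Generic Self-Adjusting Tree (GSAT) with degree function $D$ for a set of integer keys $X=\{x_1<\dots<x_n\}$ with access counts $ac_i\ge1$ consists of $m=\sum_i ac_i$, an array of $k\le\lceil D(m)\rceil$ representative keys $x_{i_1}<\dots<x_{i_k}$ with their access counts, and $k+1$ child subtrees that are GSATs for the keys strictly before $x_{i_1}$, strictly between consecutive representatives, and strictly after $x_{i_k}$. For a subtree $T'$, $m(T')$ is the total access count of keys in $T'$. A GSAT is ideal if each child $T_j$ of the root satisfies $m(T_j)\le m/(D(m)+1)$ and each child is ideal. Dynamic operations: each node $v$ (root of subtree $T_v$) has a counter $C(v)$ and a value $im(T_v)$ equal to $m(T_v)$ at the time $T_v$ was last (re)built. An operation get/insert/delete on key $x$ walks down from the root along the search path of $x$, increments $C(v)$ for every visited node and increments the access count of $x$ if found; insert of an absent key creates a new node holding $x$ with access count 1 attached as a child of the last visited node; delete only marks the key. Afterwards, among the visited nodes $v$ with $C(v)>im(T_v)/4$, the one $u$ of minimum depth (if any) is chosen and $T_u$ is rebuilt into an ideal GSAT for its unmarked keys with their current access counts, counters set to $0$ and $im$ values reset. Cost of an operation: number of visited nodes plus, if a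 rebuild happens, $O(m(T_u))$ for rebuilding $T_u$. *)

(* Defs.v *)
From Stdlib Require Import Reals Lra Lia ZArith Arith List Sorting.Sorted Permutation.
Import ListNotations.
Open Scope R_scope.

Definition sqrt_bounded (D : nat -> R) : Prop :=
  (forall m, 1 <= D m) /\
  exists Mstar : R, forall m, D m <= Rmax (sqrt (INR m)) Mstar.

(** ceiling of a real: ceil x = - floor (- x), with floor y = up y - 1. *)
Definition Rceil (x : R) : Z := (1 - up (- x))%Z.

Record rep := mkRep { key : Z; ac : nat; marked : bool }.

(** A node stores its representatives (left to right), its children
    (one more than representatives), its counter C(v) and im(T_v). *)
Inductive gsat : Type :=
| Leaf : gsat
| Node (reps : list rep) (children : list gsat) (cnt : nat) (im : nat) : gsat.

Fixpoint mass (t : gsat) : nat :=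
  match t with
  | Leaf => 0
  | Node rs ch _ _ =>
      list_sum (map ac rs) +
      (fix go (l : list gsat) : nat :=
         match l with [] => 0 | c :: l' => (mass c + go l')%nat end) ch
  end%nat.

Fixpoint all_reps (t : gsat) : list rep :=
  match t with
  | Leaf => []
  | Node rs ch _ _ =>
      rs ++ (fix go (l : list gsat) : list rep :=
               match l with [] => [] | c :: l' => all_reps c ++ go l' end) ch
  end.

Definition all_keys (t : gsat) : list Z := map key (all_reps t).

Definition above (lo : option Z) (y : Z) : Prop :=
  match lo with None => True | Some a => (a < y)%Z end.
Definition below (hi : option Z) (y : Z) : Prop :=
  match hi with None => True | Some b => (y < b)%Z end.

(** Child j of a node with representatives rs holds keys strictly between
    the (j-1)-th and the j-th representative (open ends at the borders). *)
Definition child_bounds (rs : list rep) : list (option Z * option Z) :=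
  combine (None :: map (fun r => Some (key r)) rs)
          (map (fun r => Some (key r)) rs ++ [None]).

Inductive ideal (D : nat -> R) : gsat -> Prop :=
| ideal_leaf : ideal D Leaf
| ideal_node (rs : list rep) (ch : list gsat) (C im : nat) :
    rs <> [] ->
    Sorted Z.lt (map key rs) ->
    (Z.of_nat (length rs) <= Rceil (D (mass (Node rs ch C im))))%Z ->
    Forall2 (fun c b => Forall (fun y => above (fst b) y /\ below (snd b) y)
                                (all_keys c))
            ch (child_bounds rs) ->
    Forall (fun c => INR (mass c) <= INR (mass (Node rs ch C im))
                                      / (D (mass (Node rs ch C im)) + 1)) ch ->
    Forall (ideal D) ch ->
    ideal D (Node rs ch C im).

Inductive fresh : gsat -> Prop :=
| fresh_leaf : fresh Leaf
| fresh_node (rs : list rep) (ch : list gsat) :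
    Forall fresh ch ->
    fresh (Node rs ch 0 (mass (Node rs ch 0 0))).

Definition rebuild_ok (D : nat -> R) (t t' : gsat) : Prop :=
  ideal D t' /\ fresh t' /\
  Forall (fun r => marked r = false) (all_reps t') /\
  Permutation (map (fun r => (key r, ac r)) (all_reps t'))
              (map (fun r => (key r, ac r))
                   (filter (fun r => negb (marked r)) (all_reps t))).

Inductive opkind := Get | Insert | Delete.
Definition operation : Type := (opkind * Z)%type.

Definition touch (k : opkind) (r : rep) : rep :=
  match k with
  | Get => mkRep (key r) (S (ac r)) (marked r)
  | Insert => mkRep (key r) (S (ac r)) false
  | Delete => mkRep (key r) (S (ac r)) true
  end.

Definition new_node (x : Z) : gsat := Node [mkRep x 1 false] [Leaf; Leaf] 0 1.

Definition leaf_result (k : opkind) (x : Z) : gsat :=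
  match k with Insert => new_node x | _ => Leaf end.

Definition child_index (x : Z) (rs : list rep) : nat :=
  length (filter (fun r => Z.ltb (key r) x) rs).

(** Returns the new tree, the number of visited nodes, and the depth (if
    any) of the shallowest visited node v with C(v) > im(T_v)/4 (C(v) taken
    after the increment). *)
Fixpoint walk (k : opkind) (x : Z) (t : gsat) {struct t} : gsat * nat * option nat :=
  match t with
  | Leaf => (leaf_result k x, 0%nat, None)
  | Node rs ch C im =>
      let C' := S C in
      let q := Nat.ltb im (4 * C') in
      if existsb (fun r => Z.eqb (key r) x) rs then
        (Node (map (fun r => if Z.eqb (key r) x then touch k r else r) rs) ch C' im,
         1%nat, if q then Some 0%nat else None)
      else
        let '(ch', n, o) :=
          (fix go (j : nat) (l : list gsat) {struct l} : list gsat * nat * option nat :=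
             match l with
             | [] => ([], 0%nat, None)
             | c :: l' =>
                 match j with
                 | O =>
                     match c with
                     | Leaf => (leaf_result k x :: l', 0%nat, None)
                     | Node _ _ _ _ =>
                         let '(c', n, o) := walk k x c in (c' :: l', n, o)
                     end
                 | S j' => let '(l'', n, o) := go j' l' in (c :: l'', n, o)
                 end
             end) (child_index x rs) ch in
        (Node rs ch' C' im, S n, if q then Some 0%nat else option_map S o)
  end.

Fixpoint replace_nth {A : Type} (j : nat) (a : A) (l : list A) : list A :=
  match l, j with
  | [], _ => []
  | _ :: l', O => a :: l'
  | b :: l', S j' => b :: replace_nth j' a l'
  end.

Inductive rebuild_at (D : nat -> R) (x : Z) : nat -> gsat -> gsat -> nat -> Prop :=
| rb_here (t t' : gsat) : rebuild_ok D t t' -> rebuild_at D x 0 t t' (mass t)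
| rb_down (d : nat) (rs : list rep) (ch : list gsat) (C im : nat)
          (c c' : gsat) (cost : nat) :
    nth_error ch (child_index x rs) = Some c ->
    rebuild_at D x d c c' cost ->
    rebuild_at D x (S d) (Node rs ch C im)
               (Node rs (replace_nth (child_index x rs) c' ch) C im) cost.

Definition op_step (D : nat -> R) (o : operation) (t t' : gsat) (cost : nat) : Prop :=
  let '(k, x) := o in
  let '(tw, n, q) := walk k x t in
  match q with
  | None => t' = tw /\ cost = n
  | Some d => exists rc, rebuild_at D x d tw t' rc /\ cost = (n + rc)%nat
  end.

Inductive exec (D : nat -> R) : gsat -> list operation -> gsat -> nat -> Prop :=
| exec_nil (t : gsat) : exec D t [] t 0
| exec_cons (t t1 t2 : gsat) (o : operation) (os : list operation) (c1 c2 : nat) :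
    op_step D o t t1 c1 -> exec D t1 os t2 c2 -> exec D t (o :: os) t2 (c1 + c2).

(* Main.v *)
Require Import Defs.
From Stdlib Require Import Reals List Lia Lra Permutation.
Import ListNotations.
Open Scope nat_scope.
Fixpoint go_walk (k : opkind) (x : Z) (j : nat) (l : list gsat) {struct l} : list gsat * nat * option nat :=
  match l with
  | [] => ([], 0%nat, None)
  | c :: l' =>
      match j with
      | O => match c with
             | Leaf => (leaf_result k x :: l', 0%nat, None)
             | Node _ _ _ _ => let '(c', n, o) := walk k x c in (c' :: l', n, o)
             end
      | S j' => let '(l'', n, o) := go_walk k x j' l' in (c :: l'', n, o)
      end
  end.
Lemma walk_node k x rs ch C im : walk k x (Node rs ch C im) =
  (let C' := S C in
      let q := Nat.ltb im (4 * C') in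
      if existsb (fun r => Z.eqb (key r) x) rs then
        (Node (map (fun r => if Z.eqb (key r) x then touch k r else r) rs) ch C' im,
         1%nat, if q then Some 0%nat else None)
      else
        let '(ch', n, o) := go_walk k x (child_index x rs) ch in
        (Node rs ch' C' im, S n, if q then Some 0%nat else option_map S o)).
Proof.
  assert (H : forall l j, (fix go (j : nat) (l : list gsat) {struct l} :
        list gsat * nat * option nat :=
      match l with
      | [] => ([], 0%nat, None)
      | c :: l' =>
          match j with
          | 0%nat =>
              match c with
              | Leaf => (leaf_result k x :: l', 0%nat, None)
              | Node _ _ _ _ =>
                  let '(c', n, o) := walk k x c in (c' :: l', n, o)
              end
          | S j' => let '(l'', n, o) := go j' l' in (c :: l'', n, o)
          end
      end) j l = go_walk k x j l).
  { induction l as [|c l IH]; intros j; simpl; auto. destruct j; auto. rewrite IH. reflexivity. }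
  simpl walk at 1. rewrite H. reflexivity.
Qed.
Lemma mass_node rs ch C im : mass (Node rs ch C im) = (list_sum (map ac rs) + list_sum (map mass ch))%nat.
Proof. induction ch; simpl in *; lia. Qed.
Lemma all_reps_node rs ch C im : all_reps (Node rs ch C im) = rs ++ flat_map all_reps ch.
Proof. induction ch; simpl in *. now rewrite app_nil_r. apply app_inv_head_iff in IHch. rewrite IHch, app_assoc. reflexivity. Qed.

Fixpoint gsat_ind' (P : gsat -> Prop) (HL : P Leaf)
  (HN : forall rs ch C im, Forall P ch -> P (Node rs ch C im)) (t : gsat) : P t :=
  match t with
  | Leaf => HL
  | Node rs ch C im => HN rs ch C im
      ((fix go (l : list gsat) : Forall P l :=
          match l with [] => Forall_nil _ | c :: l' => Forall_cons _ (gsat_ind' P HL HN c) (go l') end) ch)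
  end.

Fixpoint phi (t : gsat) : nat :=
  match t with
  | Leaf => 0
  | Node _ ch C _ => C + (fix go (l : list gsat) : nat := match l with [] => 0 | c :: l' => phi c + go l' end) ch
  end.
Lemma phi_node rs ch C im : phi (Node rs ch C im) = (C + list_sum (map phi ch))%nat.
Proof. induction ch; simpl in *; lia. Qed.

Definition imof (t : gsat) : nat := match t with Leaf => 0 | Node _ _ _ im => im end.

Inductive Inv (s : bool) : gsat -> Prop :=
| Inv_leaf : Inv s Leaf
| Inv_node rs ch C im :
    (s = true -> 4 * C <= im)%nat -> (1 <= im)%nat ->
    Forall (fun r => 1 <= ac r)%nat rs -> NoDup (map key rs) ->
    (mass (Node rs ch C im) <= im + C)%nat ->
    Forall (fun c => 2 * mass c <= im + 2 * C /\ 2 * imof c <= im + 2 * C)%nat ch ->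
    Forall (Inv s) ch -> Inv s (Node rs ch C im).

Lemma Inv_weak t : Inv true t -> Inv false t.
Proof.
  induction t using gsat_ind'; intros H0; inversion H0; subst; constructor; auto; try discriminate.
  rewrite Forall_forall in *; auto.
Qed.

Lemma replace_nth_sum {A} (f : A -> nat) l j c a : nth_error l j = Some c ->
  (list_sum (map f (replace_nth j a l)) + f c = list_sum (map f l) + f a)%nat.
Proof.
  revert j; induction l as [|b l IH]; intros [|j] H; simpl in *; try discriminate.
  - injection H as ->. lia.
  - specialize (IH j H). lia.
Qed.
Lemma replace_nth_nth {A} l j (c a : A) : nth_error l j = Some c -> nth_error (replace_nth j a l) j = Some a.
Proof. revert j; induction l as [|b l IH]; intros [|j] H; simpl in *; try discriminate; auto. Qed.
Lemma replace_nth_twice {A} l j (a b : A) : replace_nth j b (replace_nth j a l) = replace_nth j b l.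
Proof. revert j; induction l as [|c l IH]; intros [|j]; simpl; auto. rewrite IH; auto. Qed.
Lemma Forall_replace {A} (P : A -> Prop) l j a : Forall P l -> P a -> Forall P (replace_nth j a l).
Proof. revert j; induction l as [|c l IH]; intros [|j] H Ha; simpl; auto; inversion H; subst; auto. Qed.
Lemma Forall_nth {A} (P : A -> Prop) l j a : Forall P l -> nth_error l j = Some a -> P a.
Proof. intros H Hn. rewrite Forall_forall in H. apply H. eapply nth_error_In; eauto. Qed.

Lemma go_spec k x j l l' n o : go_walk k x j l = (l', n, o) ->
  (nth_error l j = None /\ l' = l /\ n = 0%nat /\ o = None) \/
  (nth_error l j = Some Leaf /\ l' = replace_nth j (leaf_result k x) l /\ n = 0%nat /\ o = None) \/
  (exists c cw, nth_error l j = Some c /\ c <> Leaf /\ walk k x c = (cw, n, o) /\ l' = replace_nth j cw l).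
Proof.
  revert j l' n o; induction l as [|c l IH]; intros [|j] l' n o H; simpl in H.
  - injection H as <- <- <-. left; auto.
  - injection H as <- <- <-. left; auto.
  - destruct c as [|rs ch C im].
    + injection H as <- <- <-. right; left; auto.
    + destruct (walk k x (Node rs ch C im)) as [[cw n0] o0] eqn:E. injection H as <- <- <-.
      right; right. exists (Node rs ch C im), cw. simpl. repeat split; auto; discriminate.
  - destruct (go_walk k x j l) as [[l0 n0] o0] eqn:E. injection H as <- <- <-.
    destruct (IH j l0 n0 o0 E) as [(H1&H2&H3&H4)|[(H1&H2&H3&H4)|(c0&cw&H1&H2&H3&H4)]]; subst; simpl.
    + left; auto.
    + right; left; auto.
    + right; right. exists c0, cw; auto.
Qed.

Lemma fresh_phi t : fresh t -> phi t = 0.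
Proof.
  induction t using gsat_ind'; intros Hf; inversion Hf as [|? ? Hfch]; subst; auto.
  rewrite phi_node. simpl.
  induction ch as [|c ch IH]; simpl; auto. inversion H; inversion Hfch; subst.
  rewrite H2 by auto. simpl. apply IH; auto. constructor; auto.
Qed.

Lemma fresh_imof t : fresh t -> imof t = mass t.
Proof. intros Hf; inversion Hf; subst; simpl; auto. Qed.

Lemma list_sum_app l1 l2 : list_sum (l1 ++ l2) = list_sum l1 + list_sum l2.
Proof. induction l1; simpl; lia. Qed.

Lemma mass_reps t : mass t = list_sum (map ac (all_reps t)).
Proof.
  induction t using gsat_ind'; auto.
  rewrite mass_node, all_reps_node, map_app, list_sum_app. f_equal.
  induction ch as [|c ch IH]; simpl; auto. inversion H; subst.
  rewrite map_app, list_sum_app, IH; auto.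
Qed.

Lemma sorted_nodup l : Sorted.Sorted Z.lt l -> NoDup l.
Proof.
  intros H. apply Sorted.Sorted_StronglySorted in H; [|intros a b c; lia].
  induction H; constructor; auto.
  intros Hin. rewrite Forall_forall in H0. specialize (H0 _ Hin). lia.
Qed.

Lemma Inv_acs s t : Inv s t -> Forall (fun r => 1 <= ac r) (all_reps t).
Proof.
  induction t using gsat_ind'; intros Hi; [constructor|].
  inversion Hi as [|? ? ? ? H1 H2 H3 H4 H5 H6 H7]; subst. rewrite all_reps_node. apply Forall_app; split; auto.
  clear -H H7. induction ch as [|c ch IH]; simpl; auto. inversion H; inversion H7; subst.
  apply Forall_app; split; auto.
Qed.

Lemma fresh_ideal_Inv (D : nat -> R) (HD1 : forall m, (1 <= D m)%R) t :
  ideal D t -> fresh t -> Forall (fun r => 1 <= ac r) (all_reps t) -> Inv true t.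
Proof.
  induction t as [|rs ch C im IH] using gsat_ind'; intros Hid Hf Hac; [constructor|].
  assert (Hfch : Forall fresh ch) by (inversion Hf; auto).
  assert (HC : C = 0 /\ im = mass (Node rs ch 0 0)) by (inversion Hf; auto).
  inversion Hid as [|? ? ? ? Hne Hsort Hlen Hbnd Hmass Hidch]; subst rs0 ch0 C0 im0.
  destruct HC as [-> ->].
  rewrite all_reps_node in Hac. apply Forall_app in Hac as [Hac1 Hac2].
  assert (Hmc : forall c, In c ch -> 2 * mass c <= mass (Node rs ch 0 0)).
  { intros c Hc. rewrite Forall_forall in Hmass. specialize (Hmass c Hc).
    rewrite mass_node in Hmass |- *. simpl in Hmass.
    set (m := (list_sum (map ac rs) + list_sum (map mass ch))%nat) in *.
    specialize (HD1 m). apply INR_le.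
    rewrite mult_INR. simpl (INR 2).
    apply (Rmult_le_compat_r (D m + 1)) in Hmass; [|lra].
    unfold Rdiv in Hmass. rewrite Rmult_assoc, Rinv_l in Hmass by lra.
    assert (0 <= INR (mass c))%R by apply pos_INR. nra. }
  constructor; auto.
  - lia.
  - destruct rs as [|r rs]; [congruence|]. inversion Hac1; subst.
    rewrite !mass_node. simpl. lia.
  - apply sorted_nodup; auto.
  - rewrite !mass_node. lia.
  - rewrite Forall_forall. intros c Hc. rewrite Forall_forall in Hfch.
    rewrite (fresh_imof c (Hfch c Hc)). specialize (Hmc c Hc). rewrite !mass_node in Hmc |- *. lia.
  - rewrite Forall_forall in *. intros c Hc. apply IH; auto.
    rewrite Forall_forall. intros r Hr. apply Hac2. apply in_flat_map. eauto.
Qed.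

Lemma filter_sum (l : list rep) f : list_sum (map ac (filter f l)) <= list_sum (map ac l).
Proof. induction l as [|r l IH]; simpl; auto. destruct (f r); simpl; lia. Qed.

Lemma rebuild_ok_facts (D : nat -> R) (HD1 : forall m, (1 <= D m)%R) t t' :
  Forall (fun r => 1 <= ac r) (all_reps t) -> rebuild_ok D t t' ->
  Inv true t' /\ mass t' <= mass t /\ phi t' = 0 /\ imof t' = mass t'.
Proof.
  intros Hac (Hid & Hf & Hm & Hp).
  assert (Hac' : Forall (fun r => 1 <= ac r) (all_reps t')).
  { rewrite Forall_forall in *. intros r Hr.
    assert (Hin : In (key r, ac r) (map (fun r => (key r, ac r)) (all_reps t'))) by (apply in_map_iff; eauto).
    eapply Permutation_in in Hin; [|exact Hp].
    apply in_map_iff in Hin as (r0 & Heq & Hr0). injection Heq as _ Ha0. rewrite <- Ha0.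
    apply filter_In in Hr0 as [Hr0 _]. auto. }
  split; [apply fresh_ideal_Inv with D; auto|].
  split; [|split; [apply fresh_phi; auto|apply fresh_imof; auto]].
  rewrite !mass_reps.
  apply (Permutation_map snd) in Hp. rewrite !map_map in Hp. simpl in Hp.
  apply Permutation_list_sum in Hp. eapply Nat.le_trans; [apply Nat.eq_le_incl; exact Hp|apply filter_sum].
Qed.

Lemma touch_facts k x rs : NoDup (map key rs) ->
  let rs' := map (fun r => if Z.eqb (key r) x then touch k r else r) rs in
  map key rs' = map key rs /\ list_sum (map ac rs') <= list_sum (map ac rs) + 1 /\
  (Forall (fun r => 1 <= ac r) rs -> Forall (fun r => 1 <= ac r) rs').
Proof.
  intros Hnd rs'. subst rs'.
  assert (Hk : forall r, key (if Z.eqb (key r) x then touch k r else r) = key r)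
    by (intros r; destruct (Z.eqb (key r) x); auto; destruct k; reflexivity).
  assert (Ha : forall r, ac r <= ac (if Z.eqb (key r) x then touch k r else r))
    by (intros r; destruct (Z.eqb (key r) x); auto; destruct k; simpl; lia).
  split; [rewrite map_map; apply map_ext; auto|split].
  - induction rs as [|r rs IH]; simpl; auto. inversion Hnd; subst.
    destruct (Z.eqb (key r) x) eqn:E.
    + apply Z.eqb_eq in E.
      rewrite (map_ext_in (fun r0 => if Z.eqb (key r0) x then touch k r0 else r0) (fun r0 => r0)).
      * rewrite map_id. destruct k; simpl; lia.
      * intros r0 Hr0. destruct (Z.eqb (key r0) x) eqn:E0; auto. apply Z.eqb_eq in E0.
        exfalso. apply H1. rewrite E, <- E0. apply in_map; auto.
    + specialize (IH H2). lia.
  - intros H. rewrite Forall_forall in *. intros r' Hr'. apply in_map_iff in Hr' as (r & <- & Hr).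
    specialize (H r Hr). specialize (Ha r). lia.
Qed.

Lemma Inv_leaf_result s k x : Inv s (leaf_result k x) /\ mass (leaf_result k x) <= 1 /\
  phi (leaf_result k x) = 0 /\ imof (leaf_result k x) <= 1.
Proof.
  destruct k; simpl; repeat split; try constructor; try lia.
  all: try (intros; lia).
  all: repeat constructor; simpl; try lia.
  all: intros [].
Qed.

Lemma bump s rs rs' ch C im : Inv true (Node rs ch C im) -> (s = true -> 4 * S C <= im) ->
  map key rs' = map key rs -> list_sum (map ac rs') <= list_sum (map ac rs) + 1 ->
  Forall (fun r => 1 <= ac r) rs' -> Inv s (Node rs' ch (S C) im).
Proof.
  intros HI Hs Hk Hsum Hac. inversion HI as [|? ? ? ? HI1 HI2 HI3 HI4 HI5 HI6 HI7]; subst.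
  constructor; auto.
  - rewrite Hk; auto.
  - rewrite mass_node in *. lia.
  - eapply Forall_impl; [|exact HI6]. simpl. intros c [? ?]. lia.
  - eapply Forall_impl; [|exact HI7]. intros c Hc. destruct s; auto. apply Inv_weak; auto.
Qed.

Lemma assemble s rs ch C im j c cnew : Inv true (Node rs ch C im) -> (s = true -> 4 * S C <= im) ->
  nth_error ch j = Some c -> Inv s cnew -> mass cnew <= mass c + 1 -> 2 * imof cnew <= im + 2 * S C ->
  Inv s (Node rs (replace_nth j cnew ch) (S C) im).
Proof.
  intros HI Hs Hn Hc Hm Him. inversion HI as [|? ? ? ? HI1 HI2 HI3 HI4 HI5 HI6 HI7]; subst.
  constructor; auto.
  - rewrite mass_node in *. pose proof (replace_nth_sum mass ch j c cnew Hn). lia.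
  - apply Forall_replace.
    + eapply Forall_impl; [|exact HI6]. simpl. intros c0 [? ?]. lia.
    + pose proof (Forall_nth _ _ _ _ HI6 Hn). simpl in *. lia.
  - apply Forall_replace; auto.
    eapply Forall_impl; [|exact HI7]. intros c0 Hc0. destruct s; auto. apply Inv_weak; auto.
Qed.

Ltac splitall := refine (conj _ (conj _ (conj _ (conj _ (conj _ (conj _ _)))))).

Lemma walk_main (D : nat -> R) (HD1 : forall m, (1 <= D m)%R) k x t : Inv true t ->
  forall tw n q, walk k x t = (tw, n, q) ->
  Inv false tw /\ mass tw <= mass t + 1 /\ phi tw = phi t + n /\
  imof tw <= Nat.max (imof t) 1 /\
  (match t with Leaf => n = 0 | Node _ _ _ im => 3 * 4 ^ n <= 4 * 3 ^ n * im end) /\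
  (q = None -> Inv true tw) /\
  (forall d t' rc, q = Some d -> rebuild_at D x d tw t' rc ->
     Inv true t' /\ mass t' <= mass tw /\ imof t' <= Nat.max (imof tw) (mass tw) /\
     5 * phi t' + rc <= 5 * phi tw).
Proof.
  induction t as [|rs ch C im IH] using gsat_ind'; intros HI tw n q Hw.
  { simpl in Hw. injection Hw as <- <- <-.
    destruct (Inv_leaf_result false k x) as (H1 & H2 & H3 & H4).
    destruct (Inv_leaf_result true k x) as (H1' & _).
    repeat split; auto; simpl; try lia; intros; discriminate. }
  assert (HI' := HI).
  inversion HI' as [|? ? ? ? HI1 HI2 HI3 HI4 HI5 HI6 HI7]; subst.
  specialize (HI1 eq_refl).
  rewrite walk_node in Hw. cbv zeta in Hw. remember (Nat.ltb im (4 * S C)) as b eqn:Eb.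
  assert (Hroot : forall rs' ch', Inv false (Node rs' ch' (S C) im) ->
            mass (Node rs' ch' (S C) im) <= mass (Node rs ch C im) + 1 ->
            im < 4 * S C -> forall t' rc, rebuild_at D x 0 (Node rs' ch' (S C) im) t' rc ->
     Inv true t' /\ mass t' <= mass (Node rs' ch' (S C) im) /\
     imof t' <= Nat.max (imof (Node rs' ch' (S C) im)) (mass (Node rs' ch' (S C) im)) /\
     5 * phi t' + rc <= 5 * phi (Node rs' ch' (S C) im)).
  { intros rs' ch' Hi Hm Hlt t' rc Hrb. inversion Hrb as [t0 t0' Hok|]; subst.
    destruct (rebuild_ok_facts D HD1 _ _ (Inv_acs _ _ Hi) Hok) as (A1 & A2 & A3 & A4).
    rewrite phi_node. repeat split; auto; lia. }
  destruct (existsb (fun r => Z.eqb (key r) x) rs) eqn:Hex.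
  - injection Hw as <- <- <-.
    destruct (touch_facts k x rs HI4) as (T1 & T2 & T3).
    specialize (T3 HI3).
    set (rs' := map (fun r => if Z.eqb (key r) x then touch k r else r) rs) in *.
    assert (Hm : mass (Node rs' ch (S C) im) <= mass (Node rs ch C im) + 1)
      by (rewrite !mass_node; lia).
    assert (Hf : Inv false (Node rs' ch (S C) im)) by (apply (bump false rs); auto; discriminate).
    splitall; auto.
    + rewrite !phi_node. lia.
    + simpl. lia.
    + simpl. lia.
    + intros Hq. destruct b; symmetry in Eb; rename Eb into E; simpl in Hq; try discriminate.
      apply Nat.ltb_ge in E. apply (bump true rs); auto.
    + intros d t' rc Hq Hrb. destruct b; symmetry in Eb; rename Eb into E; simpl in Hq; try discriminate.
      injection Hq as <-. apply Nat.ltb_lt in E. eapply Hroot; eauto.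
  - destruct (go_walk k x (child_index x rs) ch) as [[ch' n'] o] eqn:Hgo.
    injection Hw as <- <- <-.
    set (j := child_index x rs) in *.
    apply go_spec in Hgo as [(H1&H2&H3&H4)|[(H1&H2&H3&H4)|(c&cw&H1&H2&H3&H4)]]; try subst ch'; try subst n'; try subst o.
    +
      assert (Hf : Inv false (Node rs ch (S C) im)) by (apply (bump false rs); auto; discriminate || lia).
      splitall; auto.
      * rewrite !mass_node. lia.
      * rewrite !phi_node. lia.
      * simpl; lia.
      * simpl; lia.
      * intros Hq. destruct b; symmetry in Eb; rename Eb into E; simpl in Hq; try discriminate.
        apply Nat.ltb_ge in E. apply (bump true rs); auto; lia.
      * intros d t' rc Hq Hrb. destruct b; symmetry in Eb; rename Eb into E; simpl in Hq; try discriminate.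
        injection Hq as <-. apply Nat.ltb_lt in E. eapply Hroot; eauto. rewrite !mass_node; lia.
    +
      destruct (Inv_leaf_result false k x) as (L1 & L2 & L3 & L4).
      destruct (Inv_leaf_result true k x) as (L1' & _).
      pose proof (replace_nth_sum mass ch j Leaf (leaf_result k x) H1) as Sm.
      pose proof (replace_nth_sum phi ch j Leaf (leaf_result k x) H1) as Sp.
      assert (Hm : mass (Node rs (replace_nth j (leaf_result k x) ch) (S C) im) <= mass (Node rs ch C im) + 1)
        by (rewrite !mass_node; simpl in *; lia).
      assert (Hf : Inv false (Node rs (replace_nth j (leaf_result k x) ch) (S C) im))
        by (eapply assemble; eauto; try discriminate; simpl; lia).
      splitall; auto.
      * rewrite !phi_node. simpl in *. lia.
      * simpl; lia.
      * simpl; lia.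
      * intros Hq. destruct b; symmetry in Eb; rename Eb into E; simpl in Hq; try discriminate.
        apply Nat.ltb_ge in E. eapply assemble; eauto; simpl; lia.
      * intros d t' rc Hq Hrb. destruct b; symmetry in Eb; rename Eb into E; simpl in Hq; try discriminate.
        injection Hq as <-. apply Nat.ltb_lt in E. eapply Hroot; eauto.
    +
      pose proof (Forall_nth _ _ _ _ IH H1) as IHc. simpl in IHc.
      pose proof (Forall_nth _ _ _ _ HI7 H1) as HIc.
      pose proof (Forall_nth _ _ _ _ HI6 H1) as [Hc1 Hc2]. simpl in Hc1, Hc2.
      destruct (IHc HIc _ _ _ H3) as (W1 & W2 & W3 & W4 & W5 & W6 & W7).
      pose proof (replace_nth_sum mass ch j c cw H1) as Sm.
      pose proof (replace_nth_sum phi ch j c cw H1) as Sp.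
      assert (Hm : mass (Node rs (replace_nth j cw ch) (S C) im) <= mass (Node rs ch C im) + 1)
        by (rewrite !mass_node; simpl in *; lia).
      assert (Hf : Inv false (Node rs (replace_nth j cw ch) (S C) im))
        by (eapply assemble; eauto; try discriminate; lia).
      splitall; auto.
      * rewrite !phi_node. simpl in *. lia.
      * simpl; lia.
      * destruct c as [|rsc chc Cc imc]; [congruence|]. simpl in Hc2, W5.
        rewrite !Nat.pow_succ_r'.
        assert (4 * imc <= 3 * im) by lia.
        assert (3 * 4 ^ n' * 12 <= 4 * 3 ^ n' * imc * 12) by lia.
        nia.
      * intros Hq. destruct b; symmetry in Eb; rename Eb into E; simpl in Hq; try discriminate.
        destruct o; try discriminate. apply Nat.ltb_ge in E. eapply assemble; eauto; lia.
      * intros d t' rc Hq Hrb. destruct b; symmetry in Eb; rename Eb into E; simpl in Hq.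
        -- injection Hq as <-. apply Nat.ltb_lt in E. eapply Hroot; eauto.
        -- apply Nat.ltb_ge in E. destruct o as [d'|]; try discriminate. injection Hq as <-.
           inversion Hrb as [|d0 rs0 ch0 C0 im0 c0 c0' rc0 Hn Hrb']; subst.
           rewrite (replace_nth_nth _ _ _ _ H1) in Hn. injection Hn as <-.
           destruct (W7 _ _ _ eq_refl Hrb') as (R1 & R2 & R3 & R4).
           rewrite replace_nth_twice.
           pose proof (replace_nth_nth ch j c cw H1) as Hn2.
           pose proof (replace_nth_sum mass (replace_nth j cw ch) j cw c0' Hn2) as Sm2.
           pose proof (replace_nth_sum phi (replace_nth j cw ch) j cw c0' Hn2) as Sp2.
           rewrite replace_nth_twice in Sm2, Sp2.
           repeat split.
           ++ eapply assemble; eauto; lia.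
           ++ rewrite !mass_node. lia.
           ++ simpl. lia.
           ++ rewrite !phi_node. lia.
Qed.

Lemma step (D : nat -> R) (HD1 : forall m, (1 <= D m)%R) o t t' cost M :
  Inv true t -> imof t <= M -> mass t + 1 <= M -> op_step D o t t' cost ->
  Inv true t' /\ imof t' <= M /\ mass t' <= mass t + 1 /\
  exists n, cost + 5 * phi t' <= 5 * phi t + 6 * n /\ (n = 0 \/ 3 * 4 ^ n <= 4 * 3 ^ n * M).
Proof.
  intros HI Him Hm Hs. destruct o as [k x]. unfold op_step in Hs.
  destruct (walk k x t) as [[tw n] q] eqn:Hw.
  destruct (walk_main D HD1 k x t HI tw n q Hw) as (W1 & W2 & W3 & W4 & W5 & W6 & W7).
  assert (Hn : n = 0 \/ 3 * 4 ^ n <= 4 * 3 ^ n * M).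
  { destruct t as [|rs ch C im]; [now left|right]. simpl in Him.
    eapply Nat.le_trans; [exact W5|]. apply Nat.mul_le_mono_l; auto. }
  destruct q as [d|].
  - destruct Hs as (rc & Hrb & ->).
    destruct (W7 d t' rc eq_refl Hrb) as (R1 & R2 & R3 & R4).
    split; auto. split; [lia|]. split; [lia|]. exists n. split; auto. lia.
  - destruct Hs as (-> & ->). split; auto. split; [lia|]. split; [lia|].
    exists n. split; auto. lia.
Qed.

Lemma ln_le' x y : (0 < x)%R -> (x <= y)%R -> (ln x <= ln y)%R.
Proof. intros Hx Hxy. destruct (Rle_lt_or_eq_dec _ _ Hxy) as [H|H]. left; apply ln_increasing; auto. subst; lra. Qed.

Definition Lb (M : nat) : R := (1 + ln (INR M) / ln (4/3))%R.

Lemma ln43_pos : (0 < ln (4/3))%R.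
Proof. rewrite <- ln_1. apply ln_increasing; lra. Qed.

Lemma Lb_bound (M n : nat) : 1 <= M -> (n = 0 \/ 3 * 4 ^ n <= 4 * 3 ^ n * M) -> (INR n <= Lb M)%R.
Proof.
  intros HM [->|H].
  - unfold Lb. simpl. assert (0 <= ln (INR M))%R.
    { rewrite <- ln_1. apply ln_le'. lra. apply (le_INR 1); auto. }
    pose proof ln43_pos. assert (0 <= ln (INR M) / ln (4/3))%R by (unfold Rdiv; apply Rmult_le_pos; [lra|left; apply Rinv_0_lt_compat; lra]). lra.
  - apply le_INR in H. rewrite !mult_INR, !pow_INR in H. simpl in H.
    assert (HMp : (1 <= INR M)%R) by (apply (le_INR 1); auto).
    apply ln_le' in H; [|apply Rmult_lt_0_compat; [lra|apply pow_lt; lra]].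
    rewrite !ln_mult in H; try lra; try (apply pow_lt; lra); try (apply Rmult_lt_0_compat; [lra|apply pow_lt; lra]).
    rewrite !ln_pow in H by lra.
    replace (1 + 1 + 1)%R with 3%R in H by lra.
    replace (3 + 1)%R with 4%R in H by lra.
    assert (E : ln (4/3) = (ln 4 - ln 3)%R).
    { unfold Rdiv. rewrite ln_mult, ln_Rinv by lra. lra. }
    pose proof ln43_pos as P. rewrite E in P. unfold Lb. rewrite E.
    apply (Rmult_le_reg_r (ln 4 - ln 3)); auto.
    rewrite Rmult_plus_distr_r. unfold Rdiv. rewrite Rmult_assoc, Rinv_l by lra.
    nra.
Qed.

Lemma exec_bound (D : nat -> R) (HD1 : forall m, (1 <= D m)%R) M (HM : 1 <= M) :
  forall t ops t2 cost, exec D t ops t2 cost -> Inv true t -> imof t <= M -> mass t + length ops <= M ->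
  (INR cost + 5 * INR (phi t2) <= 5 * INR (phi t) + 6 * INR (length ops) * Lb M)%R.
Proof.
  intros t ops t2 cost He. induction He as [t|t t1 t2 o os c1 c2 Hs He IH]; intros HI Him Hm.
  - simpl. lra.
  - simpl in Hm. destruct (step D HD1 o t t1 c1 M HI Him ltac:(lia) Hs) as (S1 & S2 & S3 & n & S4 & S5).
    specialize (IH S1 S2 ltac:(lia)).
    pose proof (Lb_bound M n HM S5).
    apply le_INR in S4. rewrite !plus_INR, !mult_INR in S4. simpl length. rewrite S_INR, plus_INR.
    simpl (INR 5) in *. simpl (INR 6) in *. nra.
Qed.

Theorem lemma2 (D : nat -> R) (HD : sqrt_bounded D) :
  exists c : R, forall (ops : list operation) (t : gsat) (cost : nat),
    exec D Leaf ops t cost -> (2 <= length ops)%nat ->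
    (INR cost <= c * INR (length ops) * ln (INR (length ops)))%R.
Proof.
  destruct HD as [HD1 _].
  exists (6 * (/ ln 2 + / ln (4/3)))%R.
  intros ops t cost He Hlen.
  set (m := length ops) in *.
  assert (Hb := exec_bound D HD1 m ltac:(lia) Leaf ops t cost He (Inv_leaf true) ltac:(simpl; lia) ltac:(simpl; lia)).
  simpl (phi Leaf) in Hb. fold m in Hb.
  assert (P1 : (0 < ln 2)%R) by (rewrite <- ln_1; apply ln_increasing; lra).
  pose proof ln43_pos as P2.
  assert (Hm2 : (2 <= INR m)%R) by (apply (le_INR 2); auto).
  assert (Hl : (ln 2 <= ln (INR m))%R) by (apply ln_le'; lra).
  assert (Hph : (0 <= INR (phi t))%R) by apply pos_INR.
  unfold Lb in Hb.
  assert (Q : (1 <= ln (INR m) / ln 2)%R).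
  { apply (Rmult_le_reg_r (ln 2)); auto. unfold Rdiv. rewrite Rmult_assoc, Rinv_l by lra. lra. }
  unfold Rdiv in *.
  replace (6 * (/ ln 2 + / ln (4 / 3)) * INR m * ln (INR m))%R
    with (6 * INR m * (ln (INR m) * / ln 2 + ln (INR m) * / ln (4/3)))%R by (unfold Rdiv; ring).
  assert (6 * INR m * 1 <= 6 * INR m * (ln (INR m) * / ln 2))%R by (apply Rmult_le_compat_l; lra).
  simpl (INR 0) in Hb. lra.
Qed.
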